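(* Let $n\ge3$ and $k\ge1$. In $H_{n,k}$ the clustering coefficients are as follows. (a) The root $\mathbf r=0\ldots0$ has $c(\mathbf r)=\dfrac{(n-2)^2}{(n-1)^{k+1}-2n+3}$. (b) For each $1\le i\le k-1$, every vertex $\mathbf v=\alpha_1\ldots\alpha_i0\ldots0$ (with $k-i$ trailing zeros) with $\alpha_i\neq0$ has $c(\mathbf v)=\dfrac{(n-2)^2}{(n-1)^{k-i+1}+(n-1)^2-3n+4}$. (c) Every vertex $\mathbf p$ with all coordinates nonzero has $c(\mathbf p)=\dfrac{(n-1)^2+(2k-3)(n-1)+2-2k}{(n+k-2)(n+k-3)}$. (d) For each $1\le i\le k-1$, every vertex $\mathbf p=x_1\ldots x_k$ with $x_i=0$ and $x_j\ne0$ for all $i<j\le k$ has $c(\mathbf p)=\dfrac{(n-1)^2+(2k-2i-3)(n-1)+2+2i-2k}{(n+k-i-2)(n+k-i-3)}$.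
   Context: Let $n\ge 2$ and $k\ge 1$ be integers. $H_{n,k}$ is the simple undirected graph with vertex set $V_{n,k}=\mathbb{Z}_n^k$ (so $|V_{n,k}|=n^k$), whose vertices are written as strings $x_1x_2\ldots x_k$ with $x_j\in\mathbb{Z}_n=\{0,1,\ldots,n-1\}$. Two distinct vertices are adjacent if and only if they are related by one of the following rules. For $i=0$ the prefix $x_1\ldots x_i$ is empty, and ''$0\ldots0$'' denotes a string of zeros completing the word to length $k$. (R1) $x_1\ldots x_{k-1}x_k\sim x_1\ldots x_{k-1}y_k$ whenever $y_k\neq x_k$. (R2) For $0\le i\le k-2$: $x_1\ldots x_i0\ldots0\sim x_1\ldots x_ix_{i+1}\ldots x_k$ whenever $x_j\neq 0$ for all $i+1\le j\le k$. (R3) For $1\le i\le k-1$: $x_1\ldots x_{i-1}x_i0\ldots0\sim x_1\ldots x_{i-1}y_i0\ldots0$ whenever $x_i,y_i\neq0$ and $x_i\ne y_i$. In particular, $H_{n,1}$ is the complete graph $K_n$. For a vertex $v$ of degree $\delta_v\ge2$, its clustering coefficient is $c(v)=\frac{2\epsilon_v}{\delta_v(\delta_v-1)}$, where $\epsilon_v$ is the number of edges of the graph joining two neighbours of $v$. *)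

(* Defs.v *)
From HB Require Import structures.
From mathcomp Require Import all_boot all_order all_algebra.
Set Implicit Arguments. Unset Strict Implicit. Unset Printing Implicit Defensive.
Import Order.TTheory GRing.Theory Num.Theory.

(* Vertices of H_{n,k}: words x_1...x_k over Z_n, encoded as functions
   'I_k -> 'I_n.  Paper position j (1-based) is index j-1 (0-based) here.
   A letter is "zero" iff its nat value is 0. *)
Definition vtx (n k : nat) := {ffun 'I_k -> 'I_n}.

Section H.
Variables n k : nat.
Implicit Types x y : vtx n k.

Definition R1 x y : bool := [forall p : 'I_k, (p < k.-1)%N ==> (x p == y p)].

(* (R2), 0 <= i <= k-2 (i.e. i+2 <= k) : x = x_1..x_i 0..0, y = x_1..x_i y_{i+1}..y_k with
   all y_j (i+1 <= j <= k) nonzero.  0-based: positions p < i shared,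
   positions p >= i : x p = 0, y p <> 0. *)
Definition R2 x y : bool :=
  [exists i : 'I_k, (i.+2 <= k)%N &&
    [forall p : 'I_k, if (p < i)%N then x p == y p
                      else (val (x p) == 0%N) && (val (y p) != 0%N)]].

(* (R3), 1 <= i <= k-1 : x = x_1..x_{i-1} x_i 0..0, y = x_1..x_{i-1} y_i 0..0,
   x_i, y_i nonzero and distinct.  0-based: letter x_i is index i-1. *)
Definition R3 x y : bool :=
  [exists i : 'I_k, (1 <= i)%N &&
    [forall p : 'I_k,
       if (p < i.-1)%N then x p == y p
       else if val p == i.-1 then
         [&& val (x p) != 0%N, val (y p) != 0%N & x p != y p]
       else (val (x p) == 0%N) && (val (y p) == 0%N)]].

(* adjacency of H_{n,k}: distinct and related by one of the rules
   (R2 is stated one-directionally, so we symmetrize). *)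
Definition adj x y : bool :=
  (x != y) && [|| R1 x y, R2 x y, R2 y x | R3 x y].

Definition deg x : nat := #|[set y | adj x y]|.

Definition eps v : nat :=
  #|[set E : {set vtx n k} |
      [exists a, exists b,
        [&& E == [set a; b], adj a b, adj v a & adj v b]]]|.

Definition clust v : rat :=
  (2 * (eps v)%:R / ((deg v)%:R * ((deg v)%:R - 1)))%R.
End H.

(* Main.v *)
Require Import Defs.
From HB Require Import structures.
From mathcomp Require Import all_boot all_order all_algebra.
From mathcomp Require Import zify ring lra.
Import Order.TTheory GRing.Theory Num.Theory.
Set Implicit Arguments. Unset Strict Implicit. Unset Printing Implicit Defensive.

Lemma card_prod k n (F : 'I_k -> pred 'I_n) :
  #|[set y : {ffun 'I_k -> 'I_n} | [forall p, y p \in F p]]| = \prod_(p < k) #|F p|.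
Proof.
have := card_family F.
rewrite foldrE big_map big_enum /= => <-.
apply: eq_card => y; rewrite inE; apply/forallP/familyP => H p; exact: H.
Qed.

Lemma prod_if k (P : pred 'I_k) (x : nat) :
  \prod_(p < k) (if P p then x else 1) = x ^ #|P|.
Proof. by rewrite -big_mkcond /= prod_nat_const. Qed.

Lemma card_ge k a : #|[pred p : 'I_k | a <= p]| = k - a.
Proof.
rewrite -sum1_card; under eq_bigl do rewrite inE.
rewrite big_mkcond /=.
elim: k => [|k IH]; first by rewrite big_ord0.
rewrite big_ord_recr /= IH; case: leqP => ?; lia.
Qed.

Lemma card_eq1 k c : c < k -> #|[pred p : 'I_k | nat_of_ord p == c]| = 1.
Proof.
move=> hc; rewrite -(card1 (Ordinal hc)); apply: eq_card => p.
by rewrite !inE.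
Qed.

Lemma card_nz m : #|[pred c : 'I_m.+1 | nat_of_ord c != 0]| = m.
Proof.
transitivity #|predC1 (ord0 : 'I_m.+1)|; last by rewrite cardC1 card_ord.
by apply: eq_card => c; rewrite !inE.
Qed.

Lemma card_nz2 m (b : 'I_m.+1) : nat_of_ord b != 0 ->
  #|[pred c : 'I_m.+1 | (nat_of_ord c != 0) && (c != b)]| = m.-1.
Proof.
move=> hb; have h1 := cardD1 b [pred c : 'I_m.+1 | nat_of_ord c != 0].
have h2 := card_nz m.
rewrite !inE hb /= in h1.
suff -> : #|[pred c : 'I_m.+1 | (nat_of_ord c != 0) && (c != b)]| =
   #|[predD1 [pred c : 'I_m.+1 | nat_of_ord c != 0] & b]| by move: h1 h2; set X := #|_|; set Y := #|_|; lia.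
by apply: eq_card => c; rewrite !inE andbC.
Qed.

Ltac lz := simpl in *; first [lia | lz].

Section Work.
Variables (m k : nat).
Hypothesis hk : 0 < k.
Local Notation n := m.+1.
Local Notation V := (vtx n k).
Implicit Types x y v a b : V.

Definition lp : 'I_k := Ordinal (etrans (ltn_predL k) hk).
Lemma lpE : nat_of_ord lp = k.-1. Proof. by []. Qed.

Lemma R1E x y : R1 x y <-> (forall p : 'I_k, p < k.-1 -> x p = y p).
Proof.
split => [/forallP H p hp|H].
  by apply/eqP; move: (H p) => /implyP; apply.
by apply/forallP => p; apply/implyP => hp; apply/eqP; exact: H.
Qed.

Lemma R2E x y : R2 x y <-> exists i, i.+2 <= k /\
  (forall p : 'I_k, (p < i -> x p = y p) /\ (i <= p -> nat_of_ord (x p) = 0 /\ nat_of_ord (y p) <> 0)).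
Proof.
split.
  case/existsP => i /andP [hi /forallP H]; exists i; split => // p.
  move: (H p); case: ifP => hp.
    by move/eqP => e; split => // hp'; lz.
  by case/andP => /eqP h1 /eqP h2; split => // _; lia.
case=> i [hi H]; apply/existsP; exists (Ordinal (leq_trans (leqnSn _) hi)).
rewrite /= hi /=; apply/forallP => p; have [h1 h2] := H p.
case: ifP => hp; first by rewrite h1.
have hp' : i <= p by rewrite leqNgt hp.
by have [-> /eqP h3] := h2 hp'.
Qed.

Lemma R3E x y : R3 x y <-> exists i, 0 < i < k /\
  (forall p : 'I_k, (p < i.-1 -> x p = y p) /\
     (nat_of_ord p = i.-1 -> nat_of_ord (x p) <> 0 /\ nat_of_ord (y p) <> 0 /\ x p <> y p) /\
     (i <= p -> nat_of_ord (x p) = 0 /\ nat_of_ord (y p) = 0)).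
Proof.
split.
  case/existsP => i /andP [hi /forallP H]; exists i; split; first by rewrite hi /=.
  move=> p; move: (H p); case: ifP => hp.
    by move/eqP => e; split; [move=> _ | split => hp'; lz].
  case: eqP => hp2.
    case/and3P => /eqP h1 /eqP h2 /eqP h3; split; [move=> ?; lz|].
    by split; [move=> _ | move=> ?; lz].
  case/andP => /eqP h1 /eqP h2; split; [move=> ?; lz|].
  by split; [move=> ?; lz | move=> _].
case=> i [/andP [hi0 hi] H]; apply/existsP; exists (Ordinal hi).
rewrite /= hi0 /=; apply/forallP => p; have [h1 [h2 h3]] := H p.
case: ifP => hp; first by rewrite h1.
case: eqP => hp2.
  by have [/eqP -> [/eqP -> /eqP ->]] := h2 hp2.
have hp' : i <= p by lia.
by have [-> ->] := h3 hp'.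
Qed.

Lemma adjE x y : adj x y <-> x <> y /\ (R1 x y \/ R2 x y \/ R2 y x \/ R3 x y).
Proof.
rewrite /adj; split.
  case/andP => /eqP h /or4P H; split => //.
  by case: H; tauto.
case=> /eqP h H; rewrite h /=; apply/or4P.
by case: H => [?|[?|[?|?]]]; [constructor 1|constructor 2|constructor 3|constructor 4].
Qed.

Lemma R2_lp x y : R2 x y -> nat_of_ord (x lp) = 0 /\ nat_of_ord (y lp) <> 0.
Proof. by case/R2E => i [hi H]; apply: (proj2 (H lp)); rewrite lpE; lia. Qed.

Lemma R3_lp x y : R3 x y -> nat_of_ord (x lp) = 0 /\ nat_of_ord (y lp) = 0.
Proof. by case/R3E => i [hi H]; apply: (proj2 (proj2 (H lp))); rewrite lpE; lia. Qed.

Lemma adj_sym x y : adj x y = adj y x.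
Proof.
suff H : forall x y, adj x y -> adj y x by apply/idP/idP; apply: H.
move=> {}x {}y /adjE [ne H]; apply/adjE; split; first by move=> e; apply: ne.
case: H => [/R1E h|[h|[h|/R3E [i [hi h]]]]].
- by left; apply/R1E => p hp; rewrite h.
- by right; right; left.
- by right; left.
- right; right; right; apply/R3E; exists i; split => // p.
  have [h1 [h2 h3]] := h p; split; first by move=> hp; rewrite h1.
  split; first by move=> hp; have [? [? ?]] := h2 hp; split => //; split => //; apply: nesym.
  by move=> hp; have [? ?] := h3 hp.
Qed.

Lemma adj_irr x : adj x x = false.
Proof. by rewrite /adj eqxx. Qed.


Definition Nb v := [set y | adj v y].
Definition Pset v := [set ab : V * V | [&& adj v ab.1, adj v ab.2 & adj ab.1 ab.2]].

Lemma inNb x y : (y \in Nb x) = adj x y. Proof. by rewrite inE. Qed.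

Lemma degE v : deg v = #|Nb v|. Proof. by []. Qed.

Lemma eps2 v : 2 * eps v = #|Pset v|.
Proof.
rewrite /eps; set Es := [set E : {set V} | _].
rewrite -[#|Pset v|]sum1_card (partition_big (fun ab : V * V => [set ab.1; ab.2]) (mem Es)) /=; last first.
  case=> a b; rewrite inE /= => /and3P [h1 h2 h3]; rewrite inE.
  by apply/existsP; exists a; apply/existsP; exists b; rewrite eqxx h1 h2 h3.
rewrite mulnC -sum_nat_const; apply: eq_bigr => E.
rewrite inE => /existsP [a /existsP [b /and4P [/eqP hE hab hva hvb]]].
rewrite sum1dep_card.
have -> : [set x : V * V | (x \in Pset v) && ([set x.1; x.2] == E)] = [set (a, b); (b, a)].
  apply/setP => -[x y]; rewrite !inE /= hE.
  apply/idP/idP.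
    case/andP => /and3P [hx hy hxy] /eqP e.
    have hx' : x \in [set a; b] by rewrite -e !inE eqxx.
    have hy' : y \in [set a; b] by rewrite -e !inE eqxx orbT.
    rewrite !inE in hx' hy'.
    case/orP: hx' => /eqP ex; case/orP: hy' => /eqP ey; subst x y; rewrite ?eqxx ?orbT //.
      by rewrite adj_irr in hxy.
    by rewrite adj_irr in hxy.
  case/orP => /eqP [-> ->] /=; first by rewrite hva hvb hab eqxx.
  by rewrite hva hvb adj_sym hab setUC eqxx.
rewrite cards2; case: eqP => // -[e _]; by rewrite e adj_irr in hab.
Qed.

Lemma PsetE v : #|Pset v| = \sum_(a in Nb v) #|Nb v :&: Nb a|.
Proof.
rewrite -sum1_card.
rewrite (partition_big (fun ab : V * V => ab.1) (mem (Nb v))) /=; last first.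
  by case=> a b; rewrite inE /= => /and3P [h1 h2 h3]; rewrite inE.
apply: eq_bigr => a ha; rewrite sum1dep_card.
have inj : injective (fun b : V => (a, b)) by move=> b1 b2 [].
rewrite -(card_imset _ inj); apply: eq_card => -[x y]; rewrite !inE /=.
apply/idP/imsetP.
  case/andP => /and3P [h1 h2 h3] /eqP e; subst x; exists y => //.
  by rewrite !inE h2 h3.
case=> b; rewrite !inE => /andP [h1 h2] [-> ->].
rewrite inE in ha.
by rewrite ha h1 h2 eqxx.
Qed.

Lemma lp_eq (p : 'I_k) : ~~ (p < k.-1) -> p = lp.
Proof. move=> h; apply: ord_inj; rewrite lpE; move: (ltn_ord p); lz. Qed.

Lemma ffeq x y : (forall p : 'I_k, x p = y p) -> x = y.
Proof. by move=> h; apply/ffunP. Qed.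

Lemma eqval (c d : 'I_n) : nat_of_ord c = nat_of_ord d -> c = d.
Proof. exact: ord_inj. Qed.

Section TailNZ.
Variables (v : V) (s : nat).
Hypothesis hs : s < k.
Hypothesis hnz : forall p : 'I_k, s <= p -> nat_of_ord (v p) <> 0.
Hypothesis hz : forall p : 'I_k, 0 < s -> nat_of_ord p = s.-1 -> nat_of_ord (v p) = 0.

Definition zf (l : nat) : V := [ffun p : 'I_k => if p < l then v p else ord0].
Definition FA1 (x : V) (p : 'I_k) : pred 'I_n :=
  fun c => if p < k.-1 then c == x p else (nat_of_ord c != 0) && (c != x p).
Definition A1 (x : V) := [set y : V | [forall p, y p \in FA1 x p]].
Definition Zs := [set zf (nat_of_ord l) | l in [pred l : 'I_k | s <= l]].

Lemma inA1 x y : y \in A1 x <->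
  (forall p : 'I_k, p < k.-1 -> y p = x p) /\ nat_of_ord (y lp) <> 0 /\ y lp <> x lp.
Proof.
rewrite inE; split.
  move/forallP => H; split; first by move=> p hp; move: (H p); rewrite /FA1 unfold_in /= hp => /eqP.
  by move: (H lp); rewrite /FA1 unfold_in /= ?lpE ltnn => /andP [/eqP ? /eqP ?].
case=> h1 [h2 h3]; apply/forallP => p; rewrite /FA1 unfold_in /=.
case: ifP => hp; first by rewrite h1.
by rewrite (lp_eq (negbT hp)); apply/andP; split; apply/eqP.
Qed.

Lemma card_A1 x : nat_of_ord (x lp) <> 0 -> #|A1 x| = m.-1.
Proof.
move=> hx; rewrite card_prod.
rewrite (eq_bigr (fun p : 'I_k => if ~~ (p < k.-1) then m.-1 else 1)); last first.
  move=> p _; rewrite /FA1; case: ifP => hp /=.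
    rewrite (lp_eq hp) -(card_nz2 (b := x lp)); last by apply/eqP.
    by apply: eq_card => c; rewrite !inE ?unfold_in /= ?lpE ltnn.
  move/negbFE: hp => hp.
  by rewrite -(card1 (x p)); apply: eq_card => c; rewrite !inE ?unfold_in /= hp.
rewrite prod_if.
have -> : #|[pred p : 'I_k | ~~ (p < k.-1)]| = 1.
  transitivity #|[pred p : 'I_k | k.-1 <= p]|; last by rewrite card_ge; lz.
  by apply: eq_card => p; rewrite !inE /= ltnNge negbK.
exact: expn1.
Qed.


Lemma vlp : nat_of_ord (v lp) <> 0. Proof. apply: hnz; rewrite lpE; lz. Qed.

Lemma zf_lt l (p : 'I_k) : p < l -> zf l p = v p. Proof. by move=> h; rewrite ffunE h. Qed.
Lemma zf_ge l (p : 'I_k) : l <= p -> nat_of_ord (zf l p) = 0.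
Proof. by move=> h; rewrite ffunE ltnNge h. Qed.
Lemma zf_lp (l : 'I_k) : nat_of_ord (zf l lp) = 0.
Proof. apply: zf_ge; rewrite lpE; move: (ltn_ord l); lz. Qed.

Lemma inZs y : y \in Zs <-> exists l : 'I_k, s <= l /\ y = zf l.
Proof.
split; first by case/imsetP => l hl ->; exists l; rewrite inE in hl.
by case=> l [hl ->]; apply/imsetP; exists l; rewrite ?inE.
Qed.

Lemma card_Zs : #|Zs| = k - s.
Proof.
rewrite card_in_imset ?card_ge // => l1 l2; rewrite !inE => h1 h2 e.
apply: ord_inj; apply/eqP; rewrite eqn_leq; apply/andP; split; rewrite leqNgt; apply/negP => hl.
  have := zf_ge (leqnn l2); rewrite -e zf_lt //; apply: hnz; lz.
have := zf_ge (leqnn l1); rewrite e zf_lt //; apply: hnz; lz.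
Qed.

Lemma NbE : Nb v = A1 v :|: Zs.
Proof.
apply/setP => y; rewrite in_setU in_set.
apply/idP/orP.
- move/adjE => [ne [/R1E h|[h|[h|h]]]].
  + case: (eqVneq (nat_of_ord (y lp)) 0) => hy.
      right; apply/inZs; exists lp; split; first by rewrite lpE; lz.
      apply: ffeq => p; rewrite ffunE; case: ifP => hp; first by rewrite h.
      by rewrite (lp_eq (negbT hp)); apply: eqval; rewrite hy.
    left; apply/inA1; split; first by move=> p hp; rewrite h.
    split; first by apply/eqP.
    move=> e; apply: ne; apply: ffeq => p; case: (ltnP p k.-1) => hp; first by rewrite h.
    by rewrite (lp_eq (p := p)) ?e // -leqNgt.
  + by have [? _] := R2_lp h; exfalso; apply: vlp.
  + move/R2E: h => [i [hi H]].
    have hsi : s <= i.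
      case: (leqP s i) => // hlt.
      have hs0 : 0 < s by lz.
      have hq : s.-1 < k by lz.
      have h0 := hz (p := Ordinal hq) hs0 erefl.
      have [_ h2] := H (Ordinal hq).
      have [_ h3] := h2 ltac:(simpl; lz).
      by exfalso; apply: h3.
    have hik : i < k by lz.
    right; apply/inZs; exists (Ordinal hik); split => //.
    apply: ffeq => p; rewrite ffunE /=; case: ifP => hp; first by have [h1 _] := H p; rewrite h1.
    have [_ h2] := H p; have hp' : i <= p by rewrite leqNgt hp.
    by have [h1 _] := h2 hp'; apply: eqval; rewrite h1.
  + by have [h1 _] := R3_lp h; exfalso; apply: vlp.
- case => [/inA1 [h1 [h2 h3]] | /inZs [l [hl ->]]]; apply/adjE.
  + split; first by move=> e; apply: h3; rewrite e.
    by left; apply/R1E => p hp; rewrite h1.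
  + split.
      by move=> e; have := zf_lp l; rewrite -e; exact: vlp.
    case: (ltnP l k.-1) => hl'.
      right; right; left; apply/R2E; exists l; split; first lz.
      move=> p; split; first by move=> hp; rewrite zf_lt.
      by move=> hp; split; [exact: zf_ge | apply: hnz; lz].
    by left; apply/R1E => p hp; rewrite zf_lt //; lz.
Qed.

Lemma disj_A1Z : [disjoint A1 v & Zs].
Proof.
apply/pred0P => y /=; apply/negP => /andP [/inA1 [_ [h _]] /inZs [l [_ e]]].
by apply: h; rewrite e zf_lp.
Qed.

Lemma A1Z_adj x (l : 'I_k) : x \in A1 v -> s <= l -> adj x (zf l).
Proof.
move=> /inA1 [h1 [h2 h3]] hl; apply/adjE; split.
  by move=> e; apply: h2; rewrite e zf_lp.
case: (ltnP l k.-1) => hl'.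
  right; right; left; apply/R2E; exists l; split; first lz.
  move=> p; split; first by move=> hp; rewrite zf_lt // h1 //; lz.
  move=> hp; split; first exact: zf_ge.
  case: (ltnP p k.-1) => hp'; first by rewrite h1 //; apply: hnz; lz.
  by rewrite (lp_eq (p := p)) // -leqNgt.
left; apply/R1E => p hp; rewrite zf_lt ?h1 //; lz.
Qed.

Lemma Z_nadj (l l' : 'I_k) : s <= l -> s <= l' -> adj (zf l) (zf l') = false.
Proof.
move=> hl hl'; apply/negP => /adjE [ne H].
case: H => [/R1E h|[h|[h|/R3E [i [hi h]]]]].
- have hll : l != l' by apply/eqP => e; apply: ne; rewrite e.
  case: (ltngtP l l') => hc; last by move/ord_inj: hc => hc; rewrite hc eqxx in hll.
    have hlk : l < k.-1 by move: (ltn_ord l'); lz.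
    have e := h l hlk; have e2 : zf l' l = v l by rewrite zf_lt.
    have := zf_ge (l := l) (p := l) (leqnn l); rewrite e e2; exact: hnz.
  have hlk : l' < k.-1 by move: (ltn_ord l); lz.
  have e := h l' hlk; have e2 : zf l l' = v l' by rewrite zf_lt.
  have := zf_ge (l := l') (p := l') (leqnn l'); rewrite -e e2; exact: hnz.
- by have [_ h2] := R2_lp h; apply: h2; rewrite zf_lp.
- by have [_ h2] := R2_lp h; apply: h2; rewrite zf_lp.
- have hq : i.-1 < k by lz.
  have [_ [h2 _]] := h (Ordinal hq).
  have [a1 [a2 a3]] := h2 erefl.
  have q1 : i.-1 < l.
    rewrite ltnNge; apply/negP => hh; apply: a1; exact: (zf_ge (p := Ordinal hq) hh).
  have q2 : i.-1 < l'.
    rewrite ltnNge; apply/negP => hh; apply: a2; exact: (zf_ge (p := Ordinal hq) hh).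
  by apply: a3; rewrite !zf_lt.
Qed.

Lemma sum_setU (T : finType) (A B : {set T}) (F : T -> nat) : [disjoint A & B] ->
  \sum_(i in A :|: B) F i = \sum_(i in A) F i + \sum_(i in B) F i.
Proof. by move=> d; rewrite -bigU //; apply: eq_bigl => i; rewrite !inE. Qed.

Lemma deg_tail : deg v = m.-1 + (k - s).
Proof.
rewrite degE NbE -sum1_card sum_setU ?disj_A1Z // !sum1_card card_Zs card_A1 //.
exact: vlp.
Qed.

Lemma Pset_tail : #|Pset v| = m.-1 * (m.-1 + (k - s)).-1 + (k - s) * m.-1.
Proof.
rewrite PsetE.
have NbE' := NbE.
rewrite {1}NbE' sum_setU ?disj_A1Z //.
rewrite (eq_bigr (fun _ => (m.-1 + (k - s)).-1)); last first.
  move=> a ha; have haN : a \in Nb v by rewrite NbE' in_setU ha.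
  have -> : Nb v :&: Nb a = Nb v :\ a.
    apply/setP => b; rewrite !inE.
    case: (eqVneq b a) => [->|hba]; first by rewrite adj_irr andbF.
    case hvb: (adj v b) => //=.
    have : b \in Nb v by rewrite inE.
    rewrite NbE' in_setU => /orP [hb|/inZs [l [hl ->]]].
      move/inA1: ha => [a1 [a2 a3]]; move/inA1: hb => [b1 [b2 b3]].
      apply/adjE; split; first by move=> e; rewrite e eqxx in hba.
      by left; apply/R1E => p hp; rewrite a1 ?b1.
    exact: A1Z_adj.
  have := cardsD1 a (Nb v); rewrite haN -deg_tail -degE; lz.
rewrite [X in _ + X](eq_bigr (fun _ => m.-1)); last first.
  move=> a ha; have [l [hl ->]] := (@inZs a).1 ha.
  have -> : Nb v :&: Nb (zf l) = A1 v.
    apply/setP => b; rewrite in_setI NbE' in_setU !inNb.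
    case hb: (b \in A1 v) => /=; first by rewrite adj_sym A1Z_adj.
    case hz': (b \in Zs) => //=; have [l' [hl' ->]] := (@inZs b).1 hz'.
    exact: Z_nadj.
  by rewrite card_A1 //; exact: vlp.
rewrite !sum_nat_const card_Zs card_A1 //; last exact: vlp.
Qed.
End TailNZ.

Section HeadZ.
Variables (v : V) (j : nat).
Hypothesis hj : j < k.
Hypothesis hzt : forall p : 'I_k, j <= p -> nat_of_ord (v p) = 0.
Hypothesis hnj : forall p : 'I_k, 0 < j -> nat_of_ord p = j.-1 -> nat_of_ord (v p) <> 0.

Definition FG (i : nat) (p : 'I_k) : pred 'I_n :=
  fun c => if p < i then c == v p else nat_of_ord c != 0.
Definition Gi (i : nat) := [set y : V | [forall p, y p \in FG i p]].
Definition Gs := [set y : V | [exists i : 'I_k, (j <= i) && (y \in Gi i)]].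
Definition FT (p : 'I_k) : pred 'I_n :=
  fun c => if nat_of_ord p == j.-1 then (nat_of_ord c != 0) && (c != v p) else c == v p.
Definition Ts := [set y : V | (0 < j) && [forall p, y p \in FT p]].

Lemma inGi i y : y \in Gi i <->
  (forall p : 'I_k, p < i -> y p = v p) /\ (forall p : 'I_k, i <= p -> nat_of_ord (y p) <> 0).
Proof.
rewrite inE; split.
  move/forallP => H; split => p hp; move: (H p); rewrite /FG unfold_in /=.
    by rewrite hp => /eqP.
  by rewrite ltnNge hp /= => /eqP.
case=> h1 h2; apply/forallP => p; rewrite /FG unfold_in /=.
case: ifP => hp; first by rewrite h1.
by apply/eqP; apply: h2; rewrite leqNgt hp.
Qed.

Lemma inG y : y \in Gs <-> exists i : 'I_k, j <= i /\ y \in Gi i.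
Proof.
rewrite inE; split; first by case/existsP => i /andP [h1 h2]; exists i.
by case=> i [h1 h2]; apply/existsP; exists i; rewrite h1.
Qed.

Lemma inT y : y \in Ts <-> 0 < j /\
  (forall p : 'I_k, nat_of_ord p <> j.-1 -> y p = v p) /\
  (forall p : 'I_k, nat_of_ord p = j.-1 -> nat_of_ord (y p) <> 0 /\ y p <> v p).
Proof.
rewrite inE; split.
  case/andP => hj0 /forallP H; split => //; split => p hp; move: (H p);
    rewrite /FT unfold_in /=.
    by move/eqP: hp => /negbTE -> /eqP.
  by rewrite hp eqxx => /andP [/eqP ? /eqP ?].
case=> hj0 [h1 h2]; rewrite hj0 /=; apply/forallP => p; rewrite /FT unfold_in /=.
case: eqP => hp; first by have [? ?] := h2 p hp; apply/andP; split; apply/eqP.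
by rewrite h1.
Qed.

Lemma card_Gi i : i <= k -> #|Gi i| = m ^ (k - i).
Proof.
move=> hi; rewrite card_prod.
rewrite (eq_bigr (fun p : 'I_k => if ~~ (p < i) then m else 1)); last first.
  move=> p _; rewrite /FG; case: ifP => hp /=.
    transitivity #|[pred c : 'I_n | nat_of_ord c != 0]|; last exact: card_nz.
    by apply: eq_card => c; rewrite !inE ?unfold_in /= (negbTE hp).
  move/negbFE: hp => hp.
  by rewrite -(card1 (v p)); apply: eq_card => c; rewrite !inE ?unfold_in /= hp.
rewrite prod_if; congr (_ ^ _).
transitivity #|[pred p : 'I_k | i <= p]|; last by rewrite card_ge.
by apply: eq_card => p; rewrite !inE /= leqNgt.
Qed.

Lemma card_T : 0 < j -> #|Ts| = m.-1.
Proof.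
move=> hj0.
have -> : Ts = [set y : V | [forall p, y p \in FT p]].
  by apply/setP => y; rewrite !inE hj0.
rewrite card_prod.
rewrite (eq_bigr (fun p : 'I_k => if nat_of_ord p == j.-1 then m.-1 else 1)); last first.
  move=> p _; rewrite /FT; case: eqP => hp /=.
    have hq : nat_of_ord (v p) != 0 by apply/eqP; exact: hnj.
    rewrite -(card_nz2 hq); apply: eq_card => c; rewrite !inE ?unfold_in /=.
    by [].
  by rewrite -(card1 (v p)); apply: eq_card => c; rewrite !inE ?unfold_in /=; case: eqP.
rewrite prod_if card_eq1 ?expn1 //; lz.
Qed.

Lemma card_T0 : j = 0 -> #|Ts| = 0.
Proof. by move=> e; apply/eqP; rewrite cards_eq0; apply/eqP/setP => y; rewrite !inE e. Qed.


Lemma Gi_uniq (i1 i2 : 'I_k) y : j <= i1 -> j <= i2 -> y \in Gi i1 -> y \in Gi i2 -> i1 = i2.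
Proof.
move=> h1 h2 /inGi [a1 a2] /inGi [b1 b2].
apply: ord_inj; apply/eqP; rewrite eqn_leq; apply/andP; split; rewrite leqNgt; apply/negP => hl.
  by have := b2 i2 (leqnn _); rewrite a1 // hzt.
by have := a2 i1 (leqnn _); rewrite b1 // hzt.
Qed.

Lemma card_G : #|Gs| = \sum_(i < k | j <= i) m ^ (k - i).
Proof.
rewrite (eq_bigr (fun i : 'I_k => #|Gi i|)); last by move=> i _; rewrite card_Gi // ltnW.
under eq_bigr do rewrite -sum1_card.
rewrite (exchange_big_dep predT) //=.
rewrite -sum1_card big_mkcond /=; apply: eq_bigr => y _.
case: (boolP (y \in Gs)) => hy.
  have [i0 [hi0 hy0]] := (@inG y).1 hy.
  rewrite (bigD1 i0) /=; last by rewrite hi0 hy0.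
  rewrite big1 // => i /andP [/andP [hi hy1] hne].
  by rewrite (Gi_uniq hi hi0 hy1 hy0) eqxx in hne.
rewrite big1 // => i /andP [hi hy1].
by case/negP: hy; apply/inG; exists i.
Qed.

Lemma vlp0 : nat_of_ord (v lp) = 0. Proof. by apply: hzt; rewrite lpE; lz. Qed.

Lemma G_lp y : y \in Gs -> nat_of_ord (y lp) <> 0.
Proof. by case/inG => i [hi /inGi [_ h]]; apply: h; rewrite lpE; move: (ltn_ord i); lz. Qed.

Lemma G_low y (p : 'I_k) : y \in Gs -> p < j -> y p = v p.
Proof. by case/inG => i [hi /inGi [h _]] hp; apply: h; lz. Qed.

Definition qj : 'I_k := Ordinal (leq_ltn_trans (leq_pred j) hj).

Lemma T_lp y : y \in Ts -> nat_of_ord (y lp) = 0.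
Proof.
case/inT => hj0 [h1 _]; rewrite h1 ?vlp0 //; rewrite lpE; lz.
Qed.

Lemma T_q y : y \in Ts -> y qj <> v qj /\ nat_of_ord (y qj) <> 0.
Proof. by case/inT => hj0 [_ h2]; have [? ?] := h2 qj erefl. Qed.

Lemma T_j0 y : y \in Ts -> 0 < j.
Proof. by case/inT. Qed.

Lemma NbE2 : Nb v = Gs :|: Ts.
Proof.
apply/setP => y; rewrite in_setU in_set.
apply/idP/orP.
- move/adjE => [ne [/R1E h|[h|[h|/R3E [i [hi H]]]]]].
  + left; apply/inG; exists lp; split; first by rewrite lpE; lz.
    apply/inGi; split; first by move=> p hp; rewrite h.
    move=> p hp e; apply: ne; apply: ffeq => q.
    case: (ltnP q k.-1) => hq; first by rewrite h.
    rewrite (lp_eq (p := q)) -?leqNgt //; apply: eqval; rewrite vlp0.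
    by rewrite -(lp_eq (p := p)) // -leqNgt.
  + move/R2E: h => [i [hi H]].
    have hji : j <= i.
      case: (leqP j i) => // hlt.
      have [_ h2] := H qj.
      have [h3 _] := h2 ltac:(simpl; lz).
      by exfalso; apply: (hnj (p := qj)) => //=; lz.
    have hik : i < k by lz.
    left; apply/inG; exists (Ordinal hik); split => //.
    apply/inGi; split => p hp.
      by have [h1 _] := H p; rewrite h1.
    by have [_ h2] := H p; have [_ ?] := h2 hp.
  + by have [_ h2] := R2_lp h; exfalso; apply: h2; exact: vlp0.
  + have hq : i.-1 < k by lz.
    have [_ [h2 _]] := H (Ordinal hq); have [a1 [a2 a3]] := h2 erefl.
    have hij : i = j.
      have hi1 : i.-1 < j.
        by rewrite ltnNge; apply/negP => hh; apply: a1; apply: (hzt (p := Ordinal hq)).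
      case: (ltnP i j) => hh; last lz.
      have [_ [_ h4]] := H qj; have [h5 _] := h4 ltac:(simpl; lz).
      by exfalso; apply: (hnj (p := qj)) => //=; lz.
    subst i; right; apply/inT; split; first lz.
    split.
      move=> p hp; have [h1 [_ h3]] := H p.
      case: (ltnP p j.-1) => hp2; first by rewrite h1.
      have [e1 e2] := h3 ltac:(lz); by apply: eqval; rewrite e1 e2.
    move=> p hp; have [_ [h2' _]] := H p; have [b1 [b2 b3]] := h2' hp.
    by split => // e; apply: b3.
- case => [/inG [i [hi /inGi [h1 h2]]] | /inT [hj0 [h1 h2]]]; apply/adjE.
  + split.
      move=> e; apply: (h2 lp); first by rewrite lpE; move: (ltn_ord i); lz.
      by rewrite -e vlp0.
    case: (ltnP i k.-1) => hi'.
      right; left; apply/R2E; exists i; split; first lz.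
      move=> p; split; first by move=> hp; rewrite h1.
      by move=> hp; split; [apply: hzt; lz | apply: h2].
    by left; apply/R1E => p hp; rewrite h1 //; lz.
  + have [q1 q2] := h2 qj erefl.
    split; first by move=> e; apply: q2; rewrite e.
    right; right; right; apply/R3E; exists j; split; first by rewrite hj0.
    move=> p; split; first by move=> hp; rewrite h1 //; lz.
    split.
      move=> hp; have [r1 r2] := h2 p hp; split; first exact: hnj.
      by split => // e; apply: r2.
    by move=> hp; rewrite h1; [split; apply: hzt | lz].
Qed.

Lemma disj_GT : [disjoint Gs & Ts].
Proof.
apply/pred0P => y /=; apply/negP => /andP [hg ht].
by apply: (G_lp hg); apply: T_lp.
Qed.

Lemma GT_nadj x y : x \in Gs -> y \in Ts -> adj x y = false.
Proof.
move=> hx hy; have hj0 := T_j0 hy; have [q1 q2] := T_q hy.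
have hxq : x qj = v qj by apply: G_low => //=; lz.
apply/negP => /adjE [ne [/R1E h|[h|[h|h]]]].
- by apply: q1; rewrite -hxq h //=; lz.
- by have [h1 _] := R2_lp h; apply: (G_lp hx).
- move/R2E: h => [i [hi H]].
  have [h1 h2] := H qj.
  case: (ltnP qj i) => hq; first by apply: q1; rewrite h1.
  by have [? _] := h2 hq.
- by have [h1 _] := R3_lp h; apply: (G_lp hx).
Qed.

Lemma commonG a : a \in Gs -> Nb v :&: Nb a = A1 a.
Proof.
move=> ha; apply/setP => b; rewrite in_setI NbE2 in_setU !inNb.
have hal := G_lp ha.
case hb: (b \in A1 a).
  move/inA1: hb => [b1 [b2 b3]].
  have -> : adj a b.
    apply/adjE; split; first by move=> e; apply: b3; rewrite e.
    by left; apply/R1E => p hp; rewrite b1.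
  rewrite andbT; apply/orP; left.
  move/inG: ha => [i [hi /inGi [a1 a2]]]; apply/inG; exists i; split => //.
  apply/inGi; split.
    move=> p hp; rewrite b1 ?a1 //; move: (ltn_ord i); lz.
  move=> p hp; case: (ltnP p k.-1) => hp'; first by rewrite b1 //; apply: a2.
  by rewrite (lp_eq (p := p)) // -leqNgt.
apply/negP => /andP [/orP [hg|ht] hab]; last by rewrite GT_nadj in hab.
move/negP: hb; apply; apply/inA1.
move/adjE: hab => [ne [/R1E h|[h|[h|h]]]].
- split; first by move=> p hp; rewrite h.
  split; first exact: G_lp.
  move=> e; apply: ne; apply: ffeq => p; case: (ltnP p k.-1) => hp; first by rewrite h.
  by rewrite (lp_eq (p := p)) ?e // -leqNgt.
- by have [? _] := R2_lp h.
- by have [? _] := R2_lp h; exfalso; apply: (G_lp hg).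
- by have [? _] := R3_lp h.
Qed.

Lemma commonT a : a \in Ts -> Nb v :&: Nb a = Ts :\ a.
Proof.
move=> ha; apply/setP => b; rewrite in_setI NbE2 in_setU !inNb in_setD1.
case hg: (b \in Gs) => /=.
  have -> : (b \in Ts) = false by apply/negP => ht; apply: (G_lp hg); apply: T_lp.
  by rewrite andbF adj_sym GT_nadj.
case ht: (b \in Ts); rewrite ?andbF ?andbT //.
case: (eqVneq b a) => [->|hba]; first by rewrite adj_irr.
move/inT: ha => [hj0 [a1 a2]]; move/inT: ht => [_ [b1 b2]].
apply/adjE; split; first by move=> e; rewrite e eqxx in hba.
right; right; right; apply/R3E; exists j; split; first by rewrite hj0.
move=> p; split; first by move=> hp; rewrite a1 ?b1 //; lz.
split.
  move=> hp; have [c1 c2] := a2 p hp; have [d1 d2] := b2 p hp.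
  split => //; split => // e; move/eqP: hba; apply.
  apply: ffeq => q; case: (eqVneq (nat_of_ord q) j.-1) => hq.
    have -> : q = p by apply: ord_inj; rewrite hq hp.
    by rewrite e.
  by rewrite a1 ?b1 //; apply/eqP.
move=> hp; rewrite a1 ?b1; [split; apply: hzt; lz | lz | lz].
Qed.

Lemma deg_head : deg v = #|Gs| + #|Ts|.
Proof. by rewrite degE NbE2 -sum1_card sum_setU ?disj_GT // !sum1_card. Qed.

Lemma Pset_head : #|Pset v| = #|Gs| * m.-1 + #|Ts| * (#|Ts|).-1.
Proof.
rewrite PsetE NbE2 sum_setU ?disj_GT // -NbE2.
rewrite (eq_bigr (fun _ => m.-1)); last first.
  move=> a ha; rewrite commonG // (@card_A1 0 hk) //; exact: G_lp.
rewrite [X in _ + X](eq_bigr (fun _ => (#|Ts|).-1)); last first.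
  move=> a ha; rewrite commonT //; have := cardsD1 a Ts; rewrite ha; lz.
by rewrite !sum_nat_const.
Qed.

End HeadZ.
End Work.

Lemma geom (q j K : nat) : j <= K ->
  (((\sum_(i < K | (j <= i)%N) q ^ (K - i))%N%:R : rat) * (q%:R - 1) + q%:R = q%:R ^+ (K - j)%N.+1)%R.
Proof.
elim: K => [|K IH] hjK.
  have -> : j = 0 by lz.
  by rewrite big_ord0 mul0r add0r expr1.
case: (eqVneq j K.+1) => [e|hne].
  rewrite e subnn expr1 big1 ?mul0r ?add0r // => i hi; exfalso; move: (ltn_ord i) hi; lz.
have hjK' : j <= K by lz.
have -> : \sum_(i < K.+1 | j <= i) q ^ (K.+1 - i) = q * \sum_(i < K | j <= i) q ^ (K - i) + q.
  rewrite big_mkcond big_ord_recr /= hjK' subSnn expn1; congr (_ + _).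
  rewrite big_distrr [RHS]big_mkcond /=; apply: eq_bigr => i _; case: ifP => // _.
  by rewrite subSn ?expnS // ltnW.
rewrite natrD natrM subSn // exprS -IH //; ring.
Qed.

Lemma geom_ge (q j K : nat) : j < K -> q <= \sum_(i < K | j <= i) q ^ (K - i).
Proof.
move=> hj; have hK : K.-1 < K by lz.
rewrite (bigD1 (Ordinal hK)) /=; last lz.
have -> : K - K.-1 = 1 by lz.
by rewrite expn1 leq_addr.
Qed.

Lemma clustE m k (v : vtx m.+1 k) : 0 < k ->
  clust v = ((#|Pset v|)%:R / ((deg v)%:R * ((deg v)%:R - 1)))%R.
Proof. by move=> hk; rewrite /clust -(eps2 hk) natrM. Qed.

Unset Implicit Arguments.

Theorem mainTheorem10 (n k : nat) (hn : (3 <= n)%N) (hk : (1 <= k)%N) :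
  (* (a) the root *)
  (forall r : vtx n k, (forall p : 'I_k, val (r p) = 0%N) ->
     clust r = ((n%:R - 2) ^+ 2 / ((n%:R - 1) ^+ k.+1 - 2 * n%:R + 3))%R)
  /\
  (* (b) v = a_1 .. a_i 0 .. 0 with a_i <> 0, 1 <= i <= k-1 *)
  (forall i : nat, (1 <= i <= k - 1)%N -> forall v : vtx n k,
     (forall p : 'I_k, val p = i.-1 -> val (v p) <> 0%N) ->
     (forall p : 'I_k, (i <= p)%N -> val (v p) = 0%N) ->
     clust v = ((n%:R - 2) ^+ 2 /
                ((n%:R - 1) ^+ (k - i).+1 + (n%:R - 1) ^+ 2 - 3 * n%:R + 4))%R)
  /\
  (* (c) all coordinates nonzero *)
  (forall v : vtx n k, (forall p : 'I_k, val (v p) <> 0%N) ->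
     clust v = (((n%:R - 1) ^+ 2 + (2 * k%:R - 3) * (n%:R - 1) + 2 - 2 * k%:R)
                / ((n%:R + k%:R - 2) * (n%:R + k%:R - 3)))%R)
  /\
  (* (d) x_i = 0 and x_j <> 0 for i < j <= k, 1 <= i <= k-1 *)
  (forall i : nat, (1 <= i <= k - 1)%N -> forall v : vtx n k,
     (forall p : 'I_k, val p = i.-1 -> val (v p) = 0%N) ->
     (forall p : 'I_k, (i <= p)%N -> val (v p) <> 0%N) ->
     clust v = (((n%:R - 1) ^+ 2 + (2 * k%:R - 2 * i%:R - 3) * (n%:R - 1)
                 + 2 + 2 * i%:R - 2 * k%:R)
                / ((n%:R + k%:R - i%:R - 2) * (n%:R + k%:R - i%:R - 3)))%R).
Proof.
case: n hn => // m hn.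
have hm : (2 <= m)%N by lz.
have hq2 : (2 <= m%:R :> rat)%R by rewrite (ler_nat _ 2 m).
have natS : ((m.+1)%:R = m%:R + 1 :> rat)%R by rewrite -natr1.
have nm1 : ((m.-1)%:R = m%:R - 1 :> rat)%R by rewrite -subn1 natrB //; lz.
have nm2 : ((m.-1.-1)%:R = m%:R - 2 :> rat)%R by rewrite -!subn1 -subnDA natrB //; lz.
split; [|split; [|split]].
- move=> r hr.
  have hzt : forall p : 'I_k, (0 <= p)%N -> nat_of_ord (r p) = 0 by move=> p _; exact: hr.
  have hnj : forall p : 'I_k, (0 < 0)%N -> nat_of_ord p = 0.-1 -> nat_of_ord (r p) <> 0 by [].
  rewrite (clustE _ hk) (Pset_head hk hk hzt hnj) (deg_head hk hk hzt hnj) card_T0 // card_G //.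
  have hg := geom m (leq0n k).
  have hgm := geom_ge m hk.
  set g := (\sum_(i < k | (0 <= i)%N) m ^ (k - i))%N in hg hgm *.
  have hG : (m%:R <= g%:R :> rat)%R by rewrite ler_nat.
  rewrite subn0 in hg.
  rewrite muln0 !addn0 natrM nm1 natS addrK -hg.
  field; apply/and3P; split; rewrite gt_eqF //; nra.
- move=> i /andP [hi1 hi2] v hnz hz.
  have hik : (i < k)%N by lz.
  have hzt : forall p : 'I_k, (i <= p)%N -> nat_of_ord (v p) = 0 by exact: hz.
  have hnj : forall p : 'I_k, (0 < i)%N -> nat_of_ord p = i.-1 -> nat_of_ord (v p) <> 0.
    by move=> p _; exact: hnz.
  rewrite (clustE _ hk) (Pset_head hk hik hzt hnj) (deg_head hk hik hzt hnj).
  rewrite (card_T hk hik hnj hi1) (card_G hzt).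
  have hg := geom m (ltnW hik).
  have hgm := geom_ge m hik.
  set g := (\sum_(i0 < k | (i <= i0)%N) m ^ (k - i0))%N in hg hgm *.
  have hG : (m%:R <= g%:R :> rat)%R by rewrite ler_nat.
  rewrite !natrD !natrM nm1 nm2 natS addrK -hg.
  field; apply/and3P; split; rewrite gt_eqF //; nra.
- move=> v hnz.
  have hnz' : forall p : 'I_k, (0 <= p)%N -> nat_of_ord (v p) <> 0 by move=> p _; exact: hnz.
  have hz : forall p : 'I_k, (0 < 0)%N -> nat_of_ord p = 0.-1 -> nat_of_ord (v p) = 0 by [].
  rewrite (clustE _ hk) (Pset_tail hk hk hnz' hz) (deg_tail hk hk hnz' hz) subn0.
  have e1 : (((m.-1 + k).-1)%:R = m%:R - 2 + k%:R :> rat)%R.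
    by rewrite -subn1 natrB; [rewrite natrD nm1; ring | lz].
  rewrite !natrD !natrM e1 nm1 natS; congr (_ / _)%R; ring.
- move=> i /andP [hi1 hi2] v hz hnz.
  have hik : (i < k)%N by lz.
  have hz' : forall p : 'I_k, (0 < i)%N -> nat_of_ord p = i.-1 -> nat_of_ord (v p) = 0.
    by move=> p _; exact: hz.
  rewrite (clustE _ hk) (Pset_tail hk hik hnz hz') (deg_tail hk hik hnz hz').
  have e0 : ((k - i)%:R = k%:R - i%:R :> rat)%R by rewrite natrB // ltnW.
  have e1 : (((m.-1 + (k - i)).-1)%:R = m%:R - 2 + k%:R - i%:R :> rat)%R.
    by rewrite -subn1 natrB; [rewrite natrD nm1 e0; ring | lz].
  rewrite !natrD !natrM e1 nm1 e0 natS; congr (_ / _)%R; ring.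
Qed.
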